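(* Let $k$ be a field, $J,K$ proper monomial ideals in $Q=k[x,y,z]$, and $I=JK$. Then $[I:x]\cdot[I:y]\subseteq z\,[I:(x,y)]+I$.
   Context: For ideals $I,L$ of $Q$, $I:L=\{f\in Q: fL\subseteq I\}$ and $I:f=I:(f)$. *)

(* Defs.v *)
From HB Require Import structures.
From mathcomp Require Import all_boot all_order all_algebra.
Set Implicit Arguments. Unset Strict Implicit. Unset Printing Implicit Defensive.
Import GRing.Theory.
Local Open Scope ring_scope.

Definition Qring (k : fieldType) := {poly {poly {poly k}}}.

Definition varx (k : fieldType) : Qring k := 'X.
Definition vary (k : fieldType) : Qring k := ('X)%:P.
Definition varz (k : fieldType) : Qring k := (('X)%:P)%:P.

Definition mono (k : fieldType) (a b c : nat) : Qring k :=
  varx k ^+ a * vary k ^+ b * varz k ^+ c.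

Definition is_monomial (k : fieldType) (m : Qring k) : Prop :=
  exists a b c, m = mono k a b c.

Definition gen (k : fieldType) (S : Qring k -> Prop) (f : Qring k) : Prop :=
  exists s : seq (Qring k * Qring k),
    (forall p, p \in s -> S p.2) /\ f = \sum_(p <- s) p.1 * p.2.

Definition principal (k : fieldType) (f : Qring k) : Qring k -> Prop :=
  gen (fun g => g = f).

Definition monomial_ideal (k : fieldType) (I : Qring k -> Prop) : Prop :=
  exists S : Qring k -> Prop,
    (forall m, S m -> is_monomial m) /\ (forall f, I f <-> gen S f).

Definition proper_Qideal (k : fieldType) (I : Qring k -> Prop) : Prop := ~ I 1.

Definition ideal_mul (k : fieldType) (J K : Qring k -> Prop) : Qring k -> Prop :=
  gen (fun p => exists j q, J j /\ K q /\ p = j * q).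

Definition colon (k : fieldType) (I L : Qring k -> Prop) : Qring k -> Prop :=
  fun f => forall g, L g -> I (f * g).

Definition colon_elt (k : fieldType) (I : Qring k -> Prop) (f : Qring k) :=
  colon I (principal f).

Definition ideal_xy (k : fieldType) : Qring k -> Prop :=
  gen (fun g => g = varx k \/ g = vary k).

Definition z_times_plus (k : fieldType) (L I : Qring k -> Prop) : Qring k -> Prop :=
  fun f => exists h i, L h /\ I i /\ f = varz k * h + i.

(* Main.v *)
Require Import Defs.
From HB Require Import structures.
From mathcomp Require Import all_boot all_order all_algebra.
From mathcomp Require Import zify ring.
Set Implicit Arguments. Unset Strict Implicit. Unset Printing Implicit Defensive.
Import GRing.Theory.
Local Open Scope ring_scope.

Definition coef3 (k : fieldType) (f : Qring k) (a b c : nat) : k := f`_a`_b`_c.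
Definition cst (k : fieldType) (r : k) : Qring k := r%:P%:P%:P.

Lemma coef3D (k : fieldType) (u v : Qring k) a b c :
  coef3 (u + v) a b c = coef3 u a b c + coef3 v a b c.
Proof. by rewrite /coef3 !coefD. Qed.

Lemma coef3_0 (k : fieldType) a b c : coef3 (0 : Qring k) a b c = 0.
Proof. by rewrite /coef3 !coef0. Qed.

Lemma coef3_cst (k : fieldType) (r : k) (g : Qring k) a b c :
  coef3 (cst r * g) a b c = r * coef3 g a b c.
Proof. by rewrite /coef3 /cst !coefCM. Qed.

Lemma coef3_mono (k : fieldType) (g : Qring k) a b c a' b' c' :
  coef3 (mono k a b c * g) a' b' c' =
  if [&& (a <= a')%N, (b <= b')%N & (c <= c')%N]
  then coef3 g (a' - a) (b' - b) (c' - c) else 0.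
Proof.
rewrite /coef3 /mono /vary /varz -!mulrA -!rmorphXn.
rewrite coefXnM; case: ltnP => ha /=; first by rewrite !coef0.
rewrite coefCM coefXnM; case: ltnP => hb /=; first by rewrite !coef0.
rewrite coefCM coefCM coefXnM; case: ltnP => hc //=.
Qed.

Lemma expand1 (R : nzRingType) (T : {poly R} -> Prop) :
  T 0 -> (forall u v, T u -> T v -> T (u + v)) ->
  forall p : {poly R}, (forall i, T ((p`_i)%:P * 'X^i)) -> T p.
Proof.
move=> T0 TD p H; rewrite -[p]coefK poly_def.
apply: big_ind => // i _; rewrite -mul_polyC; exact: H.
Qed.

Lemma cst_mono (k : fieldType) (r : k) a b c :
  cst r * mono k a b c = ((r%:P * 'X^c)%:P * 'X^b)%:P * 'X^a.
Proof.
rewrite /cst /mono /varx /vary /varz !polyCM !rmorphXn; ring.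
Qed.

Lemma expand3 (k : fieldType) (T : Qring k -> Prop) :
  T 0 -> (forall u v, T u -> T v -> T (u + v)) ->
  forall f, (forall a b c, T (cst (coef3 f a b c) * mono k a b c)) -> T f.
Proof.
move=> T0 TD f H; apply: (expand1 T0 TD) => a.
apply: (expand1 (T := fun g => T (g%:P * 'X^a))).
- by rewrite polyC0 mul0r.
- by move=> u v Hu Hv; rewrite polyCD mulrDl; apply: TD.
move=> b.
apply: (expand1 (T := fun g => T ((g%:P * 'X^b)%:P * 'X^a))).
- by rewrite polyC0 mul0r polyC0 mul0r.
- by move=> u v Hu Hv; rewrite polyCD mulrDl polyCD mulrDl; apply: TD.
move=> c; rewrite -cst_mono; exact: H.
Qed.

Definition upc (E : nat -> nat -> nat -> Prop) :=
  forall a b c a' b' c', (a <= a')%N -> (b <= b')%N -> (c <= c')%N ->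
    E a b c -> E a' b' c'.
Definition clE (k : fieldType) (E : nat -> nat -> nat -> Prop) (f : Qring k) :=
  forall a b c, coef3 f a b c != 0 -> E a b c.

Lemma clE0 (k : fieldType) E : clE E (0 : Qring k).
Proof. by move=> a b c; rewrite coef3_0 eqxx. Qed.

Lemma clED (k : fieldType) E (u v : Qring k) : clE E u -> clE E v -> clE E (u + v).
Proof.
move=> Hu Hv a b c; rewrite coef3D.
case: (eqVneq (coef3 u a b c) 0) => [->|/Hu //]; rewrite add0r; exact: Hv.
Qed.

Lemma clE_monoM (k : fieldType) E (g : Qring k) r a b c :
  upc E -> clE E g -> clE E (cst r * mono k a b c * g).
Proof.
move=> uE Hg a' b' c'; rewrite -mulrA coef3_cst coef3_mono.
case: ifP => [/and3P[ha hb hc]|]; last by rewrite mulr0 eqxx.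
move=> H; have /Hg : coef3 g (a' - a) (b' - b) (c' - c) != 0.
  by apply: contraNneq H => ->; rewrite mulr0.
apply: uE; lia.
Qed.

Lemma clEM (k : fieldType) E (g h : Qring k) : upc E -> clE E g -> clE E (h * g).
Proof.
move=> uE Hg; apply: (expand3 (T := fun h => clE E (h * g))) => //.
- by rewrite mul0r; apply: clE0.
- by move=> u v Hu Hv; rewrite mulrDl; apply: clED.
move=> a b c; exact: clE_monoM.
Qed.

Lemma clE_mono (k : fieldType) E a b c : upc E -> E a b c -> clE E (mono k a b c).
Proof.
move=> uE He a' b' c'; rewrite -[mono k a b c]mulr1 coef3_mono.
case: ifP => [/and3P[ha hb hc] _|]; last by rewrite eqxx.
by apply: uE He.
Qed.

Lemma mono_add (k : fieldType) a b c a' b' c' :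
  mono k a b c * mono k a' b' c' = mono k (a + a') (b + b') (c + c').
Proof. rewrite /mono !exprD; ring. Qed.

Lemma mono0 (k : fieldType) : mono k 0 0 0 = 1.
Proof. by rewrite /mono !expr0 !mulr1. Qed.

Lemma cst0 (k : fieldType) : cst (0 : k) = 0.
Proof. by rewrite /cst !polyC0. Qed.

Lemma gen0 (k : fieldType) (S : Qring k -> Prop) : gen S 0.
Proof. by exists [::]; rewrite big_nil. Qed.

Lemma genD (k : fieldType) (S : Qring k -> Prop) u v : gen S u -> gen S v -> gen S (u + v).
Proof.
move=> [s1 [H1 ->]] [s2 [H2 ->]]; exists (s1 ++ s2); split; last by rewrite big_cat.
by move=> p; rewrite mem_cat => /orP[/H1|/H2].
Qed.

Lemma genM (k : fieldType) (S : Qring k -> Prop) h u : gen S u -> gen S (h * u).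
Proof.
move=> [s [H ->]]; exists [seq (h * p.1, p.2) | p <- s]; split.
  by move=> p /mapP[q qs ->] /=; apply: H.
rewrite big_map big_distrr /=; apply: eq_bigr => p _; by rewrite mulrA.
Qed.

Lemma gen_base (k : fieldType) (S : Qring k -> Prop) g : S g -> gen S g.
Proof.
move=> Hg; exists [:: (1, g)]; split; first by move=> p; rewrite inE => /eqP ->.
by rewrite big_seq1 mul1r.
Qed.

Lemma gen_ind (k : fieldType) (S T : Qring k -> Prop) :
  T 0 -> (forall u v, T u -> T v -> T (u + v)) ->
  (forall h g, S g -> T (h * g)) -> forall f, gen S f -> T f.
Proof.
move=> T0 TD TM f [s [H ->]]; rewrite big_seq; apply: big_ind => // p /H; exact: TM.
Qed.

Definition ES (k : fieldType) (S : Qring k -> Prop) a b c :=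
  exists a0 b0 c0, S (mono k a0 b0 c0) /\ (a0 <= a)%N /\ (b0 <= b)%N /\ (c0 <= c)%N.

Lemma upcES (k : fieldType) (S : Qring k -> Prop) : upc (ES S).
Proof.
move=> a b c a' b' c' ha hb hc [a0 [b0 [c0 [H [h1 [h2 h3]]]]]].
exists a0, b0, c0; split => //; lia.
Qed.

Lemma gen_clE (k : fieldType) (S : Qring k -> Prop) f :
  (forall m, S m -> is_monomial m) -> gen S f -> clE (ES S) f.
Proof.
move=> HS; apply: gen_ind; [exact: clE0 | by move=> *; apply: clED|].
move=> h g Sg; apply: clEM; first exact: upcES.
have [a [b [c Eg]]] := HS _ Sg; rewrite Eg; apply: clE_mono; first exact: upcES.
by exists a, b, c; rewrite -Eg; split => //; lia.
Qed.

Lemma clE_gen (k : fieldType) (S : Qring k -> Prop) f :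
  clE (ES S) f -> gen S f.
Proof.
move=> Hf; apply: expand3; [exact: gen0 | by move=> *; apply: genD |].
move=> a b c; case: (eqVneq (coef3 f a b c) 0) => [->|/Hf].
  by rewrite cst0 mul0r; apply: gen0.
move=> [a0 [b0 [c0 [H [h1 [h2 h3]]]]]].
have -> : mono k a b c = mono k (a - a0) (b - b0) (c - c0) * mono k a0 b0 c0.
  by rewrite mono_add !subnK.
by rewrite mulrA; apply: genM; apply: gen_base.
Qed.

Definition EP (E1 E2 : nat -> nat -> nat -> Prop) a b c :=
  exists a1 b1 c1 a2 b2 c2, E1 a1 b1 c1 /\ E2 a2 b2 c2 /\
    (a1 + a2 <= a)%N /\ (b1 + b2 <= b)%N /\ (c1 + c2 <= c)%N.

Lemma upcEP E1 E2 : upc (EP E1 E2).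
Proof.
move=> a b c a' b' c' ha hb hc [a1 [b1 [c1 [a2 [b2 [c2 [H1 [H2 [h1 [h2 h3]]]]]]]]]].
exists a1, b1, c1, a2, b2, c2; do 2!split => //; lia.
Qed.

Lemma I_clE (k : fieldType) (J K SJ SK : Qring k -> Prop) :
  (forall m, SJ m -> is_monomial m) -> (forall f, J f <-> gen SJ f) ->
  (forall m, SK m -> is_monomial m) -> (forall f, K f <-> gen SK f) ->
  forall f, ideal_mul J K f -> clE (EP (ES SJ) (ES SK)) f.
Proof.
move=> mJ eJ mK eK; apply: gen_ind; [exact: clE0 | by move=> *; apply: clED|].
move=> h g [j [q [Jj [Kq ->]]]]; apply: clEM; first exact: upcEP.
have cJ := gen_clE mJ (proj1 (eJ j) Jj).
have cK := gen_clE mK (proj1 (eK q) Kq).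
apply: (expand3 (T := fun j => clE (EP (ES SJ) (ES SK)) (j * q))) => //.
- by rewrite mul0r; apply: clE0.
- by move=> u v Hu Hv; rewrite mulrDl; apply: clED.
move=> a b c; case: (eqVneq (coef3 j a b c) 0) => [->|/cJ HJ].
  by rewrite cst0 !mul0r; apply: clE0.
move=> a' b' c'; rewrite -mulrA coef3_cst coef3_mono.
case: ifP => [/and3P[ha hb hc]|]; last by rewrite mulr0 eqxx.
move=> H; have /cK HK : coef3 q (a' - a) (b' - b) (c' - c) != 0.
  by apply: contraNneq H => ->; rewrite mulr0.
exists a, b, c, (a' - a)%N, (b' - b)%N, (c' - c)%N; do 2!split => //; lia.
Qed.

Lemma clE_I (k : fieldType) (J K SJ SK : Qring k -> Prop) :
  (forall f, J f <-> gen SJ f) -> (forall f, K f <-> gen SK f) ->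
  forall f, clE (EP (ES SJ) (ES SK)) f -> ideal_mul J K f.
Proof.
move=> eJ eK f Hf; apply: expand3; [exact: gen0 | by move=> *; apply: genD |].
move=> a b c; case: (eqVneq (coef3 f a b c) 0) => [->|/Hf].
  by rewrite cst0 mul0r; apply: gen0.
move=> [a1 [b1 [c1 [a2 [b2 [c2 [H1 [H2 [h1 [h2 h3]]]]]]]]]].
have Jm : J (mono k a1 b1 c1).
  apply/eJ; apply: clE_gen. refine (clE_mono _ H1); exact: upcES.
have Km : K (mono k a2 b2 c2).
  apply/eK; apply: clE_gen; refine (clE_mono _ H2); exact: upcES.
have -> : mono k a b c = mono k (a - a1 - a2) (b - b1 - b2) (c - c1 - c2) *
   (mono k a1 b1 c1 * mono k a2 b2 c2).
  rewrite !mono_add; congr mono; lia.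
rewrite mulrA; apply: genM; apply: gen_base.
by exists (mono k a1 b1 c1), (mono k a2 b2 c2).
Qed.
Local Open Scope nat_scope.
Lemma comb (j1x j1y j1z k1x k1y k1z j2x j2y j2z k2x k2y k2z sx sy sz ex ey ez fx fy fz : nat) :
  0 < j1x+j1y+j1z -> 0 < k1x+k1y+k1z -> 0 < j2x+j2y+j2z -> 0 < k2x+k2y+k2z ->
  j1x+k1x <= ex+1 -> j1y+k1y <= ey -> j1z+k1z <= ez ->
  j2x+k2x <= fx -> j2y+k2y <= fy+1 -> j2z+k2z <= fz ->
  sx = ex + fx -> sy = ey + fy -> sz = ez + fz ->
  (j1x+k1x <= sx /\ j1y+k1y <= sy /\ j1z+k1z <= sz) \/
  (j1x+k2x <= sx /\ j1y+k2y <= sy /\ j1z+k2z <= sz) \/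
  (j2x+k1x <= sx /\ j2y+k1y <= sy /\ j2z+k1z <= sz) \/
  (j2x+k2x <= sx /\ j2y+k2y <= sy /\ j2z+k2z <= sz) \/
  (0 < sz /\ j1x+k1x <= sx+1 /\ j1y+k1y <= sy /\ j1z+k1z <= sz-1
          /\ j2x+k2x <= sx /\ j2y+k2y <= sy+1 /\ j2z+k2z <= sz-1).
Proof.
move=> *.
have [h|h] := leqP 1 (j2x+k2x); first by lia.
have [h'|h'] := leqP 1 (j1y+k1y); first by lia.
have [h2|h2] := leqP 1 k1x; have [h3|h3] := leqP 1 j2y;
have [h4|h4] := leqP 1 j1x; have [h5|h5] := leqP 1 k2y; lia.
Qed.
Local Open Scope ring_scope.

Lemma varx_mono (k : fieldType) : varx k = mono k 1 0 0.
Proof. by rewrite /mono !expr0 expr1 !mulr1. Qed.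
Lemma vary_mono (k : fieldType) : vary k = mono k 0 1 0.
Proof. by rewrite /mono !expr0 expr1 mulr1 mul1r. Qed.
Lemma varz_mono (k : fieldType) : varz k = mono k 0 0 1.
Proof. by rewrite /mono !expr0 expr1 !mul1r. Qed.

Theorem mainTheorem7 (k : fieldType) (J K : Qring k -> Prop)
  (hJ : monomial_ideal J) (hK : monomial_ideal K)
  (pJ : proper_Qideal J) (pK : proper_Qideal K) :
  let I := ideal_mul J K in
  forall f : Qring k,
    ideal_mul (colon_elt I (@varx k)) (colon_elt I (@vary k)) f ->
    z_times_plus (colon I (@ideal_xy k)) I f.
Proof.
move=> I f hf.
have [SJ [mJ eJ]] := hJ; have [SK [mK eK]] := hK.
have nJ : forall a b c, ES SJ a b c -> (0 < a + b + c)%N.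
  move=> [|a] [|b] [|c] H; try lia; exfalso; apply: pJ.
  rewrite -(mono0 k); apply/eJ; apply: clE_gen; refine (clE_mono _ H); exact: upcES.
have nK : forall a b c, ES SK a b c -> (0 < a + b + c)%N.
  move=> [|a] [|b] [|c] H; try lia; exfalso; apply: pK.
  rewrite -(mono0 k); apply/eK; apply: clE_gen; refine (clE_mono _ H); exact: upcES.
have IEP : forall a b c, EP (ES SJ) (ES SK) a b c -> I (mono k a b c).
  move=> a b c H; apply: (clE_I eJ eK); refine (clE_mono _ H); exact: upcEP.
pose L := ideal_xy (k:=k).
have c0 : colon I L 0 by move=> g _; rewrite mul0r; apply: gen0.
have cD : forall u v, colon I L u -> colon I L v -> colon I L (u + v).
  by move=> u v Hu Hv g Hg; rewrite mulrDl; apply: genD; [apply: Hu | apply: Hv].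
have cM : forall h u, colon I L u -> colon I L (h * u).
  by move=> h u Hu g Hg; rewrite -mulrA; apply: genM; apply: Hu.
pose T := z_times_plus (colon I L) I.
have T0 : T 0 by exists 0, 0; split => //; split; [apply: gen0 | rewrite mulr0 addr0].
have TD : forall u v, T u -> T v -> T (u + v).
  move=> u v [h1 [i1 [H1 [I1 ->]]]] [h2 [i2 [H2 [I2 ->]]]].
  exists (h1 + h2), (i1 + i2); split; first exact: cD.
  split; first exact: genD.
  rewrite mulrDr; ring.
have TM : forall w u, T u -> T (w * u).
  move=> w u [h1 [i1 [H1 [I1 ->]]]].
  exists (w * h1), (w * i1); split; first exact: cM.
  split; first exact: genM.
  rewrite mulrDr mulrCA //.
have key : forall a b c a' b' c', EP (ES SJ) (ES SK) (a + 1) b c ->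
    EP (ES SJ) (ES SK) a' (b' + 1) c' -> T (mono k (a + a') (b + b') (c + c')).
  move=> a b c a' b' c'.
  move=> [a1 [b1 [c1 [a2 [b2 [c2 [HJ1 [HK1 [h1 [h2 h3]]]]]]]]]].
  move=> [a3 [b3 [c3 [a4 [b4 [c4 [HJ2 [HK2 [h4 [h5 h6]]]]]]]]]].
  have := comb (nJ _ _ _ HJ1) (nK _ _ _ HK1) (nJ _ _ _ HJ2) (nK _ _ _ HK2)
    h1 h2 h3 h4 h5 h6 (erefl (a + a')%N) (erefl (b + b')%N) (erefl (c + c')%N).
  have TI : forall u, I u -> T u.
    by move=> u Iu; exists 0, u; split => //; split => //; rewrite mulr0 add0r.
  move=> [[g1 [g2 g3]]|[[g1 [g2 g3]]|[[g1 [g2 g3]]|[[g1 [g2 g3]]|]]]].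
  - apply: TI; apply: IEP; exists a1, b1, c1, a2, b2, c2; do 2!split => //.
  - apply: TI; apply: IEP; exists a1, b1, c1, a4, b4, c4; do 2!split => //.
  - apply: TI; apply: IEP; exists a3, b3, c3, a2, b2, c2; do 2!split => //.
  - apply: TI; apply: IEP; exists a3, b3, c3, a4, b4, c4; do 2!split => //.
  move=> [hz [g1 [g2 [g3 [g4 [g5 g6]]]]]].
  pose m := mono k (a + a') (b + b') (c + c' - 1).
  have -> : mono k (a + a') (b + b') (c + c') = varz k * m.
    rewrite varz_mono /m mono_add; congr mono; lia.
  exists m, 0; split; last by split; [apply: gen0 | rewrite addr0].
  move=> g; apply: (gen_ind (T := fun g => I (m * g))).
  - by rewrite mulr0; apply: gen0.
  - by move=> u v Hu Hv; rewrite mulrDr; apply: genD.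
  move=> w g0 [->|->]; rewrite mulrCA; apply: genM.
    rewrite varx_mono /m mono_add; apply: IEP.
    exists a1, b1, c1, a2, b2, c2; do 2!split => //; lia.
  rewrite vary_mono /m mono_add; apply: IEP.
  exists a3, b3, c3, a4, b4, c4; do 2!split => //; lia.
have Tgh : forall g h, colon_elt I (varx k) g -> colon_elt I (vary k) h -> T (g * h).
  move=> g h Hg Hh.
  have Ig : I (g * varx k) by apply: Hg; apply: gen_base.
  have Ih : I (h * vary k) by apply: Hh; apply: gen_base.
  have cg := I_clE mJ eJ mK eK Ig.
  have ch := I_clE mJ eJ mK eK Ih.
  have cg' : forall a b c, coef3 g a b c != 0 -> EP (ES SJ) (ES SK) (a + 1) b c.
    move=> a b c H; apply: cg; rewrite mulrC varx_mono coef3_mono ifT.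
      by rewrite addnK !subn0.
    by apply/and3P; split; lia.
  have ch' : forall a b c, coef3 h a b c != 0 -> EP (ES SJ) (ES SK) a (b + 1) c.
    move=> a b c H; apply: ch; rewrite mulrC vary_mono coef3_mono ifT.
      by rewrite addnK !subn0.
    by apply/and3P; split; lia.
  apply: (expand3 (T := fun g => T (g * h))).
  - by rewrite mul0r.
  - by move=> u v Hu Hv; rewrite mulrDl; apply: TD.
  move=> a b c; case: (eqVneq (coef3 g a b c) 0) => [->|/cg' Ea].
    by rewrite cst0 !mul0r.
  apply: (expand3 (T := fun h => T (cst (coef3 g a b c) * mono k a b c * h))).
  - by rewrite mulr0.
  - by move=> u v Hu Hv; rewrite mulrDr; apply: TD.
  move=> a' b' c'; case: (eqVneq (coef3 h a' b' c') 0) => [->|/ch' Eb].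
    by rewrite cst0 !mul0r mulr0.
  have -> : cst (coef3 g a b c) * mono k a b c * (cst (coef3 h a' b' c') * mono k a' b' c')
     = (cst (coef3 g a b c) * cst (coef3 h a' b' c')) * (mono k a b c * mono k a' b' c').
    ring.
  rewrite mono_add; apply: TM; exact: key.
apply: (gen_ind (T := T)) hf => //.
by move=> w g [g1 [h1 [Hg1 [Hh1 ->]]]]; apply: TM; apply: Tgh.
Qed.
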